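(* Let $d\ge1$ and consider the cubical cell structure on $\mathbb{R}^d$ given by $\mathbb{Z}^d$. For every integer $m\ge 1$ and all $\mathbb{Z}_2$-valued cochains $\alpha,\beta$ on this cell structure, $$\delta(\alpha\cup_m\beta)=\delta\alpha\cup_m\beta+\alpha\cup_m\delta\beta+\alpha\cup_{m-1}\beta+\beta\cup_{m-1}\alpha,$$ where $\cup_m$ are the hypercubic higher cup products defined in the context.
   Context: Cell structure: the $k$-cells are the integer translates of the $k$-dimensional faces of unit cubes of $\mathbb{Z}^d$. A $k$-cell $c$ spans coordinate directions $i_1<\dots<i_k$. Its subcells are labelled by words $w\in\{+,-,\bullet\}^k$: the cell $c(w)$ fixes $x_{i_r}$ at its maximal (resp. minimal) value on $c$ when $w_r=+$ (resp. $-$), and lets $x_{i_r}$ vary when $w_r=\bullet$. A $\mathbb{Z}_2$-valued $p$-cochain is a function from $p$-cells to $\mathbb{Z}_2$, taken to be zero on cells of other dimensions. The coboundary is $(\delta\alpha)(c)=\sum\alpha(c(w))$ over the words $w$ with exactly one entry in $\{+,-\}$. Higher cup products: for $m\ge0$, a $p$-cochain $\alpha$ and a $q$-cochain $\beta$, and a $k$-cell $c$ with $k=p+q-m$, $$(\alpha\cup_m\beta)(c)=\sum_{1\le l_1<\dots<l_m\le k}\sum_{(w,w')}\alpha(c(w))\beta(c(w')).$$ The inner sum runs over pairs of words with $w_{l_r}=w'_{l_r}=\bullet$ for all $r$. For each position $s\notin\{l_r\}$, let $\ell(s)=\#\{r:l_r<s\}$ and $\sigma_s=(-1)^{\ell(s)}\in\{+,-\}$.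 Then $(w_s,w'_s)\in\{(\sigma_s,\bullet),(\bullet,-\sigma_s)\}$. Terms whose faces have the wrong dimensions for $\alpha$ or $\beta$ vanish. *)

(* Defs.v *)
From HB Require Import structures.
From mathcomp Require Import all_boot all_order all_algebra.
Set Implicit Arguments. Unset Strict Implicit. Unset Printing Implicit Defensive.

(* A cell of Z^d: its minimal corner (a point of Z^d) and the set of coordinate
   directions it spans. Its dimension is #|dirs|. *)
Definition cell (d : nat) : Type := ({ffun 'I_d -> int} * {set 'I_d})%type.
Definition cbase d (c : cell d) : {ffun 'I_d -> int} := c.1.
Definition cdirs d (c : cell d) : {set 'I_d} := c.2.

(* Z_2-valued cochains (Z_2 = bool with xor as addition). *)
Definition cochain d := cell d -> bool.
Definition is_pcochain d (p : nat) (a : cochain d) : Prop :=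
  forall c : cell d, #|cdirs c| != p -> a c = false.

(* Letters of words: + , - , bullet *)
Inductive sgn := Plus | Minus | Dot.
Definition sgn_to (x : sgn) : 'I_3 :=
  match x with Plus => inord 0 | Minus => inord 1 | Dot => inord 2 end.
Definition sgn_of (i : 'I_3) : sgn :=
  match val i with 0 => Plus | 1 => Minus | _ => Dot end.
Lemma sgn_toK : cancel sgn_to sgn_of.
Proof. by case; rewrite /sgn_of /= inordK. Qed.
HB.instance Definition _ := Finite.copy sgn (can_type sgn_toK).

Definition sgn_neg (x : sgn) : sgn :=
  match x with Plus => Minus | Minus => Plus | Dot => Dot end.

(* Words on a k-cell with directions S = {i_1 < ... < i_k}: a word assigns a
   letter to each direction of S (position r <-> direction i_r, which preserves
   the order); we normalize it to be Dot outside S. *)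
Notation word d := {ffun 'I_d -> sgn}.
Definition word_on d (S : {set 'I_d}) (w : word d) : bool :=
  [forall i, (i \notin S) ==> (w i == Dot)].

Definition face d (c : cell d) (w : word d) : cell d :=
  ([ffun i => (cbase c i + (if (i \in cdirs c) && (w i == Plus) then 1 else 0))%R],
   [set i in cdirs c | w i == Dot]).

Definition cobound d (a : cochain d) : cochain d := fun c =>
  \big[addb/false]_(w : word d | word_on (cdirs c) w && (#|[set i in cdirs c | w i != Dot]| == 1))
     a (face c w).

Definition sigma d (L : {set 'I_d}) (s : 'I_d) : sgn :=
  if odd #|[set l in L | l < s]| then Minus else Plus.

Definition cup_pair d (S L : {set 'I_d}) (w w' : word d) : bool :=
  [forall i, (i \in L) ==> (w i == Dot) && (w' i == Dot)] &&
  [forall s, ((s \in S) && (s \notin L)) ==>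
     (((w s == sigma L s) && (w' s == Dot)) ||
      ((w s == Dot) && (w' s == sgn_neg (sigma L s))))].

(* Higher cup product a \cup_m b.  (It automatically vanishes on cells of
   dimension other than p+q-m when a, b are p-, q-cochains.) *)
Definition cup d (m : nat) (a b : cochain d) : cochain d := fun c =>
  \big[addb/false]_(L : {set 'I_d} | (L \subset cdirs c) && (#|L| == m))
   \big[addb/false]_(w : word d | word_on (cdirs c) w)
    \big[addb/false]_(w' : word d | word_on (cdirs c) w' && cup_pair (cdirs c) L w w')
      (a (face c w) && b (face c w')).

(* Main.v *)
Require Import Defs.
From mathcomp Require Import all_boot all_order all_algebra.
Require Import Defs.
Set Implicit Arguments. Unset Strict Implicit. Unset Printing Implicit Defensive.

Definition eqs (a b : sgn) : bool := match a, b with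
 | Plus, Plus => true | Minus, Minus => true | Dot, Dot => true | _, _ => false end.
Lemma sgn_eqE (a b : sgn) : (a == b) = eqs a b.
Proof. by apply/eqP/idP; [move->; case: b | case: a; case: b]. Qed.

Section S.
Variable d : nat.
Implicit Types (w x y u v : word d) (S T L : {set 'I_d}) (c : cell d).

Definition dw : word d := [ffun _ => Dot].
Definition upd (w : word d) (t : 'I_d) (e : sgn) : word d :=
  [ffun i => if i == t then e else w i].
Definition comp (w v : word d) : word d :=
  [ffun i => if w i == Dot then v i else w i].

Lemma face_face c w v : face (face c w) v = face c (comp w v).
Proof.
rewrite /face /cbase /cdirs /=; congr pair.
  apply/ffunP => i; rewrite !ffunE !inE !sgn_eqE.
  by case: (i \in c.2); case: (w i); case: (v i); rewrite /= ?GRing.addr0.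
apply/setP => i; rewrite !inE ffunE !sgn_eqE.
by case: (i \in c.2); case: (w i); case: (v i).
Qed.

Lemma comp_dw_upd v t e : e != Dot -> comp (upd dw t e) v = upd v t e.
Proof.
move=> he; apply/ffunP => i; rewrite !ffunE.
by move: he; rewrite !sgn_eqE; case: (i == t); case: e.
Qed.

Lemma comp_upd w t e : w t = Dot -> comp w (upd dw t e) = upd w t e.
Proof.
move=> hw; apply/ffunP => i; rewrite !ffunE.
case: eqP => [//|wi]; case: eqP => // it.
by rewrite it hw in wi.
Qed.

Lemma part_at (F : word d -> sgn -> bool) (P : pred (word d)) (Q : pred sgn) t :
  \big[addb/false]_(x | P x && Q (x t)) F x (x t) =
  \big[addb/false]_(e | Q e) \big[addb/false]_(x | P x && (x t == e)) F x e.
Proof.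
rewrite (partition_big (fun x => x t) Q) => [|x /andP[]//].
apply: eq_bigr => e Qe; apply: eq_big; last first.
  move=> x /andP[_ H]. move/eqP: H => H. by rewrite H.
move=> x /=; case: (P x) => //=; case: eqP => [->|]; by rewrite ?Qe ?andbF.
Qed.

Lemma big_andl (I : finType) (P : pred I) (F : I -> bool) b :
  b && \big[addb/false]_(i | P i) F i = \big[addb/false]_(i | P i) (b && F i).
Proof. by case: b => //=; rewrite big1. Qed.

Lemma big_andr (I : finType) (P : pred I) (F : I -> bool) b :
  (\big[addb/false]_(i | P i) F i) && b = \big[addb/false]_(i | P i) (F i && b).
Proof. by rewrite andbC big_andl; apply: eq_bigr => i _; rewrite andbC. Qed.

Lemma big_condl (I : finType) (P Q : pred I) (F : I -> bool) :
  \big[addb/false]_(i | P i && Q i) F i = \big[addb/false]_(i | P i) (Q i && F i).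
Proof. by rewrite big_mkcondr; apply: eq_bigr => i _; case: (Q i). Qed.

Lemma upd_on S v t e : t \in S -> word_on S (upd v t e) = word_on S v.
Proof.
move=> tS; apply: eq_forallb => i; rewrite ffunE.
by case: (eqVneq i t) => [->|]; rewrite ?tS.
Qed.

Lemma reupd (P : pred (word d)) (F : word d -> bool) t e :
  \big[addb/false]_(x | P x && (x t == e)) F x =
  \big[addb/false]_(v | P (upd v t e) && (v t == Dot)) F (upd v t e).
Proof.
rewrite (reindex_onto (fun v => upd v t e) (fun x => upd x t Dot)).
  apply: eq_bigl => v; rewrite [upd v t e t]ffunE eqxx /= eqxx andbT; congr andb.
  apply/eqP/eqP => [<-|h]; first by rewrite ffunE eqxx.
  by apply/ffunP => i; rewrite !ffunE; case: eqP => [->|].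
move=> x /andP[_ /eqP <-]; apply/ffunP => i; rewrite !ffunE.
by case: eqP => [->|].
Qed.

Lemma coboundE (a : cochain d) c :
  cobound a c = \big[addb/false]_(t in cdirs c)
                  \big[addb/false]_(e | e != Dot) a (face c (upd dw t e)).
Proof.
rewrite /cobound.
transitivity (\big[addb/false]_(w | word_on (cdirs c) w &&
      (#|[set i in cdirs c | w i != Dot]| == 1))
   \big[addb/false]_(t in cdirs c) ((w t != Dot) && a (face c w))).
  apply: eq_bigr => w /andP[won /cards1P[t0 ht0]].
  rewrite -big_condl (eq_bigl (fun t => t \in [set t0])) ?big_set1 //.
  by move=> t; rewrite -ht0 inE.
rewrite exchange_big; apply: eq_bigr => t tS.
rewrite -big_condl.
rewrite (part_at (fun x _ => a (face c x)) _ (fun e => e != Dot)).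
apply: eq_bigr => e he.
rewrite (big_pred1 (upd dw t e)) // => w.
rewrite -andbA; apply/idP/eqP => [/and3P[won /cards1P[t0 ht0] /eqP wt]|->].
  have t0t : t0 = t.
    have : t \in [set t0] by rewrite -ht0 inE tS wt he.
    by move/set1P.
  apply/ffunP => i; rewrite !ffunE; case: eqP => [->|nit] //.
  case: (boolP (i \in cdirs c)) => iS.
    apply/eqP; apply/negPn/negP => hi; apply: nit.
    have : i \in [set t0] by rewrite -ht0 inE iS hi.
    by move/set1P => ->.
  by move/forallP: won => /(_ i); rewrite iS => /eqP.
rewrite ffunE eqxx eqxx andbT; apply/andP; split.
  apply/forallP => i; apply/implyP => iS; rewrite ffunE.
  case: (eqVneq i t) => [eit|_]; last by rewrite ffunE.
  by rewrite eit tS in iS.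
apply/cards1P; exists t; apply/setP => i; rewrite !inE !ffunE.
case: (eqVneq i t) => [->|_]; first by rewrite tS he.
by rewrite sgn_eqE andbF.
Qed.


Lemma forall_U1 (f : 'I_d) (G : {set 'I_d}) (P : pred 'I_d) :
  [forall s, (s \in f |: G) ==> P s] = P f && [forall s, (s \in G) ==> P s].
Proof.
apply/idP/idP.
  move/forallP => h; apply/andP; split; first by have := h f; rewrite setU11.
  by apply/forallP => s; apply/implyP => sG; have := h s; rewrite inE sG orbT.
move/andP=> [Pf /forallP h]; apply/forallP => s; apply/implyP.
rewrite !inE => /orP[/eqP->//| sG]; by have := h s; rewrite sG.
Qed.

Definition clm (g : 'I_d -> bool) (G : {set 'I_d}) : bool :=
  \big[addb/false]_(t in G) [forall s, (s \in G) ==> (s != t) ==> (g s == (t < s))]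
  (+) [forall s, (s \in G) ==> ~~ g s] (+) [forall s, (s \in G) ==> g s].

Lemma clm_pref (g : 'I_d -> bool) (F : {set 'I_d}) n : clm g [set s in F | s < n] = false.
Proof.
elim: n => [|n IH].
  have -> : [set s in F | s < 0] = set0 by apply/setP => s; rewrite !inE ltn0 andbF.
  rewrite /clm big_set0.
  have h : forall P : pred 'I_d, [forall s, (s \in set0) ==> P s] = true.
    by move=> P; apply/forallP => s; rewrite inE.
  by rewrite !h.
case: (ltnP n d) => [nd|dn]; last first.
  rewrite (_ : [set s in F | s < n.+1] = [set s in F | s < n]) //.
  apply/setP => s; rewrite !inE; have := ltn_ord s => sd.
  by rewrite ltnS (leq_trans sd dn) (leq_trans (ltnW sd) dn).
set f := Ordinal nd.
case: (boolP (f \in F)) => fF; last first.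
  rewrite (_ : [set s in F | s < n.+1] = [set s in F | s < n]) //.
  apply/setP => s; rewrite !inE ltnS leq_eqVlt.
  case: (boolP (s \in F)) => //= sF; case: eqP => // sn.
  have sf : s = f by apply: val_inj.
  by rewrite sf (negbTE fF) in sF.
set G := [set s in F | s < n].
have -> : [set s in F | s < n.+1] = f |: G.
  apply/setP => s; rewrite !inE ltnS leq_eqVlt.
  case: (boolP (s == f)) => [/eqP ->|sf]; first by rewrite fF eqxx.
  have -> : (s == n :> nat) = false.
    by apply/negbTE; apply: contra sf => /eqP sn; apply/eqP/val_inj.
  by [].
have fG : f \notin G by rewrite inE ltnn andbF.
have Gf : forall s, s \in G -> s < f by move=> s; rewrite inE => /andP[].
rewrite /clm big_setU1 //= !forall_U1 eqxx /=.
have -> : [forall s, (s \in G) ==> (s != f) ==> (g s == (f < s))] =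
          [forall s, (s \in G) ==> ~~ g s].
  apply: eq_forallb => s; case: (boolP (s \in G)) => //= sG.
  have sf := Gf s sG.
  rewrite (_ : s != f) /=; last by apply/eqP => e; rewrite e ltnn in sf.
  by rewrite ltnNge (ltnW sf) /=; case: (g s).
rewrite (eq_bigr (fun t => g f && [forall s, (s \in G) ==> (s != t) ==> (g s == (t < s))])); last first.
  move=> t tG; rewrite forall_U1; have tf := Gf t tG.
  rewrite (_ : f != t) /=; last by apply/eqP => e; rewrite e ltnn in tf.
  by rewrite tf; case: (g f).
rewrite -big_andl.
move: IH; rewrite /clm -/G.
set X := \big[addb/false]_(t in G) _.
set A := [forall s, _ ==> ~~ g s].
set C := [forall s, _ ==> g s].
by case: (g f); case: X; case: A; case: C.
Qed.

Lemma clm0 (g : 'I_d -> bool) (F : {set 'I_d}) : clm g F = false.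
Proof.
rewrite -(clm_pref g F d); congr clm; apply/setP => s; by rewrite inE ltn_ord andbT.
Qed.

Definition Dset T u v := [set i in T | (u i == Dot) && (v i == Dot)].
Definition Cup k T u v := (#|Dset T u v| == k) && cup_pair T (Dset T u v) u v.
Definition par L (s : 'I_d) := odd #|[set l in L | l < s]|.
Definition okv (o : bool) (p q : sgn) :=
  ((p == Dot) && (q == Dot)) ||
  (((p == Dot) != (q == Dot)) && (((p == Minus) || (q == Plus)) == o)).

Lemma CupE k T u v : Cup k T u v = (#|Dset T u v| == k) &&
  [forall s, (s \in T) ==> okv (par (Dset T u v) s) (u s) (v s)].
Proof.
rewrite /Cup /cup_pair; congr andb.
rewrite (_ : [forall i, _ ==> _] = true) /=; last first.
  by apply/forallP => i; apply/implyP; rewrite inE => /andP[].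
apply: eq_forallb => s; case: (boolP (s \in T)) => //= sT.
rewrite inE sT /= /okv /sigma /par !sgn_eqE.
by case: odd; case: (u s); case: (v s).
Qed.

Lemma cp_D T L u v : L \subset T -> cup_pair T L u v -> L = Dset T u v.
Proof.
move=> LT /andP[/forallP h1 /forallP h2]; apply/setP => i; rewrite inE.
case: (boolP (i \in L)) => iL.
  by have := h1 i; rewrite iL /= => ->; rewrite (subsetP LT i iL).
case: (boolP (i \in T)) => iT //=; have := h2 i; rewrite iT iL /=.
rewrite /sigma !sgn_eqE; by case: odd; case: (u i); case: (v i).
Qed.

Lemma sum_L T k u v :
  \big[addb/false]_(L : {set 'I_d} | (L \subset T) && (#|L| == k)) cup_pair T L u v = Cup k T u v.
Proof.
case: (boolP (Cup k T u v)) => hC.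
  move: (hC) => /andP[hk hcp].
  rewrite (bigD1 (Dset T u v)) /=; last first.
    by rewrite hk andbT; apply/subsetP => i; rewrite inE => /andP[].
  rewrite hcp big1 //= => L /andP[/andP[LT _] nL].
  apply/negbTE/negP => cpL; move/eqP: nL; apply; exact: cp_D.
rewrite big1 // => L /andP[LT /eqP hL]; apply/negbTE/negP => cpL.
move/negP: hC; apply; rewrite /Cup -(cp_D LT cpL) cpL hL eqxx.
done.
Qed.

Lemma cupE k (a b : cochain d) c : cup k a b c =
  \big[addb/false]_(w | word_on (cdirs c) w) \big[addb/false]_(w' | word_on (cdirs c) w')
     (Cup k (cdirs c) w w' && (a (face c w) && b (face c w'))).
Proof.
rewrite /cup.
transitivity (\big[addb/false]_(L : {set 'I_d} | (L \subset cdirs c) && (#|L| == k))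
  \big[addb/false]_(w | word_on (cdirs c) w) \big[addb/false]_(w' | word_on (cdirs c) w')
     (cup_pair (cdirs c) L w w' && (a (face c w) && b (face c w')))).
  by apply: eq_bigr => L _; apply: eq_bigr => w _; rewrite big_condl.
rewrite exchange_big; apply: eq_bigr => w _; rewrite exchange_big.
by apply: eq_bigr => w' _; rewrite -big_andr sum_L.
Qed.

Lemma Cup_ff k T u v (s : 'I_d) : s \in T -> u s != Dot -> v s != Dot -> Cup k T u v = false.
Proof.
move=> sT us vs; rewrite CupE; apply/negbTE; apply/nandP; right.
apply/negP => /forallP/(_ s); rewrite sT /= /okv.
by move: us vs; rewrite !sgn_eqE; case: (u s); case: (v s).
Qed.

Lemma forall_D1 T (t : 'I_d) (P : pred 'I_d) : t \in T ->
  [forall s, (s \in T) ==> P s] = P t && [forall s, (s \in T :\ t) ==> P s].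
Proof. by move=> tT; rewrite -{1}(setD1K tT) forall_U1. Qed.

Lemma par_U1 (D : {set 'I_d}) (t s : 'I_d) : t \notin D -> par (t |: D) s = (t < s) (+) par D s.
Proof.
move=> tD; rewrite /par; case: (boolP (t < s)) => ts.
  have -> : [set l in t |: D | l < s] = t |: [set l in D | l < s].
    by apply/setP => l; rewrite !inE; case: (eqVneq l t) => [->|] //=; rewrite ts.
  by rewrite cardsU1 inE (negbTE tD) /=.
have -> : [set l in t |: D | l < s] = [set l in D | l < s] => //.
apply/setP => l; rewrite !inE; case: (eqVneq l t) => [->|] //=.
by rewrite (negbTE ts) (negbTE tD).
Qed.

Lemma sub_sum (S F : {set 'I_d}) (X : 'I_d -> bool) : F \subset S ->
  \big[addb/false]_(t in S) ((t \in F) && X t) = \big[addb/false]_(t in F) X t.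
Proof.
move=> FS; rewrite -big_condl; apply: eq_bigl => t.
by case: (boolP (t \in F)) => tF; rewrite ?andbT ?andbF ?(subsetP FS t tF).
Qed.

Definition gf x y (D : {set 'I_d}) (s : 'I_d) :=
  ((x s == Minus) || (y s == Plus)) (+) par D s.

Lemma Cup_mod m S x y (t : 'I_d) u' v' : 0 < m ->
  (forall s, s \in S -> (x s == Dot) || (y s == Dot)) ->
  t \in S -> t \notin Dset S x y -> u' t = Dot -> v' t = Dot ->
  (forall s, s != t -> u' s = x s) -> (forall s, s != t -> v' s = y s) ->
  Cup m S u' v' = (#|Dset S x y| == m.-1) &&
    [forall s, (s \in S :\: Dset S x y) ==> (s != t) ==> (gf x y (Dset S x y) s == (t < s))].
Proof.
move=> m0 noB tS tD hu0 hv0 hu hv.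
have DU : Dset S u' v' = t |: Dset S x y.
  apply/setP => l; rewrite [in LHS]inE [in RHS]inE.
  case: (eqVneq l t) => [->|lt] /=; first by rewrite tS hu0 hv0 !sgn_eqE set11.
  by rewrite (hu l lt) (hv l lt) !inE (negbTE lt) /= andbA.
rewrite CupE DU cardsU1 tD; congr andb.
  by case: m m0.
apply: eq_forallb => s; case: (eqVneq s t) => [->|st].
  by rewrite tS hu0 hv0 /okv !sgn_eqE /= implybT.
rewrite hu // hv // par_U1 // /gf.
case: (par _ s); case: (t < s); rewrite !inE;
case: (boolP (s \in S)) => sS //=; have := noB s sS;
rewrite /okv !sgn_eqE; by case: (x s); case: (y s).
Qed.

Lemma coef_id m S x y : 0 < m ->
  \big[addb/false]_(t in S) [&& x t != Dot, y t == x t &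
                               Cup m (S :\ t) (upd x t Dot) (upd y t Dot)]
  = \big[addb/false]_(t in S) ((x t != Dot) && Cup m S (upd x t Dot) y)
    (+) \big[addb/false]_(t in S) ((y t != Dot) && Cup m S x (upd y t Dot))
    (+) Cup m.-1 S x y (+) Cup m.-1 S y x.
Proof.
move=> m0.
case: (pickP [pred t | [&& t \in S, x t != Dot & y t != Dot]]) =>
   [t0 /and3P[t0S xt0 yt0] | noB].
  rewrite (Cup_ff _ t0S xt0 yt0) (Cup_ff _ t0S yt0 xt0) !addbF.
  rewrite !(bigD1 t0 t0S) /=.
  have t0n : forall t, t != t0 -> (t0 == t) = false.
    by move=> t tt0; rewrite eq_sym (negbTE tt0).
  rewrite big1 ?addbF; last first.
    move=> t /andP[tS tt0]; rewrite (@Cup_ff _ _ _ _ t0) ?andbF //;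
    by rewrite ?ffunE ?t0n // !inE t0n // t0S.
  rewrite big1 ?addbF; last first.
    move=> t /andP[tS tt0]; rewrite (@Cup_ff _ _ _ _ t0) ?andbF //;
    by rewrite ?ffunE ?t0n.
  rewrite big1 ?addbF; last first.
    move=> t /andP[tS tt0]; rewrite (@Cup_ff _ _ _ _ t0) ?andbF //;
    by rewrite ?ffunE ?t0n.
  rewrite xt0 yt0 /=.
  set D := Dset S x y.
  have D1 : Dset S (upd x t0 Dot) y = D.
    apply/setP => l; rewrite !inE ffunE; case: (eqVneq l t0) => [->|] //=.
    by rewrite (negbTE yt0) !andbF.
  have D2 : Dset S x (upd y t0 Dot) = D.
    apply/setP => l; rewrite !inE ffunE; case: (eqVneq l t0) => [->|] //=.
    by rewrite (negbTE xt0) !andbF.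
  have D3 : Dset (S :\ t0) (upd x t0 Dot) (upd y t0 Dot) = D.
    apply/setP => l; rewrite !inE !ffunE; case: (eqVneq l t0) => [->|] //=.
    by rewrite (negbTE xt0) !andbF.
  rewrite !CupE D1 D2 D3 !(forall_D1 _ t0S).
  have E : forall u' v' : word d, (forall s, s != t0 -> u' s = x s) ->
      (forall s, s != t0 -> v' s = y s) ->
      [forall s, (s \in S :\ t0) ==> okv (par D s) (u' s) (v' s)] =
      [forall s, (s \in S :\ t0) ==> okv (par D s) (x s) (y s)].
    move=> u' v' hu hv; apply: eq_forallb => s; rewrite !inE.
    by case: (eqVneq s t0) => //= st; rewrite hu // hv.
  have ux : forall s, s != t0 -> upd x t0 Dot s = x s.
    by move=> s st; rewrite ffunE (negbTE st).
  have uy : forall s, s != t0 -> upd y t0 Dot s = y s.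
    by move=> s st; rewrite ffunE (negbTE st).
  rewrite (E _ _ ux uy) (E _ _ ux (fun _ _ => erefl)) (E _ _ (fun _ _ => erefl) uy).
  rewrite !ffunE eqxx.
  set R := [forall s, _].
  move: xt0 yt0; rewrite /okv !sgn_eqE.
  by case: (par D t0); case: (x t0); case: (y t0); case: R; case: (#|D| == m).
have nb : forall s, s \in S -> (x s == Dot) || (y s == Dot).
  by move=> s sS; have := noB s; rewrite /= sS /=; case: (x s == Dot); case: (y s == Dot).
set D := Dset S x y.
set g := gf x y D.
have KL0 : \big[addb/false]_(t in S) [&& x t != Dot, y t == x t &
       Cup m (S :\ t) (upd x t Dot) (upd y t Dot)] = false.
  apply: big1 => t tS; apply/negbTE/negP => /and3P[xt /eqP yt _].
  by have := nb t tS; rewrite yt orbb (negbTE xt).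
have K3 : Cup m.-1 S x y = (#|D| == m.-1) && [forall s, (s \in S :\: D) ==> ~~ g s].
  rewrite CupE -/D; congr andb; apply: eq_forallb => s; rewrite /g /gf.
  case: (par D s); rewrite /D /Dset !inE; case: (boolP (s \in S)) => sS //=;
  have := nb s sS; rewrite /okv !sgn_eqE; by case: (x s); case: (y s).
have DC : Dset S y x = D by apply/setP => l; rewrite !inE [(y l == Dot) && _]andbC.
have K4 : Cup m.-1 S y x = (#|D| == m.-1) && [forall s, (s \in S :\: D) ==> g s].
  rewrite CupE DC; congr andb; apply: eq_forallb => s; rewrite /g /gf.
  case: (par D s); rewrite /D /Dset !inE; case: (boolP (s \in S)) => sS //=;
  have := nb s sS; rewrite /okv !sgn_eqE; by case: (x s); case: (y s).
have K12 : \big[addb/false]_(t in S) ((x t != Dot) && Cup m S (upd x t Dot) y)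
    (+) \big[addb/false]_(t in S) ((y t != Dot) && Cup m S x (upd y t Dot)) =
    (#|D| == m.-1) && \big[addb/false]_(t in S :\: D)
       [forall s, (s \in S :\: D) ==> (s != t) ==> (g s == (t < s))].
  rewrite -big_split big_andl -(@sub_sum S) ?subsetDl //; apply: eq_bigr => t tS.
  have ux : forall s, s != t -> upd x t Dot s = x s.
    by move=> s st; rewrite ffunE (negbTE st).
  have uy : forall s, s != t -> upd y t Dot s = y s.
    by move=> s st; rewrite ffunE (negbTE st).
  have ut : forall w : word d, upd w t Dot t = Dot by move=> w; rewrite ffunE eqxx.
  case: (boolP (x t == Dot)) => xt; case: (boolP (y t == Dot)) => yt.
  - have tD : t \in D by rewrite /D inE tS xt yt.
    by rewrite inE tD.
  - have tD : t \notin D by rewrite /D inE tS xt (negbTE yt).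
    rewrite (@Cup_mod m S x y t x (upd y t Dot) m0 nb tS tD (eqP xt) (ut y) (fun _ _ => erefl) uy).
    by rewrite inE tD tS /=.
  - have tD : t \notin D by rewrite /D inE tS (negbTE xt).
    rewrite (@Cup_mod m S x y t (upd x t Dot) y m0 nb tS tD (ut x) (eqP yt) ux (fun _ _ => erefl)).
    by rewrite inE tD tS /= addbF.
  - by have := nb t tS; rewrite (negbTE xt) (negbTE yt).
rewrite KL0 -addbA K12 K3 K4.
have := clm0 g (S :\: D); rewrite /clm.
set X := \big[addb/false]_(t in _) _.
set A := [forall s, _ ==> ~~ g s].
set C := [forall s, _ ==> g s].
by case: (#|D| == m.-1); case: X; case: A; case: C.
Qed.

Lemma andb_xorr (p q r : bool) : (p && q) (+) (p && r) = p && (q (+) r).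
Proof. by case: p. Qed.

Lemma updK v t e : v t = Dot -> upd (upd v t e) t Dot = v.
Proof. by move=> vt; apply/ffunP => i; rewrite !ffunE; case: (eqVneq i t) => [->|]. Qed.

Lemma won_D1 S t v : t \in S -> word_on (S :\ t) v = (v t == Dot) && word_on S v.
Proof.
move=> tS; apply/forallP/andP.
  move=> h; split; first by have := h t; rewrite !inE eqxx.
  by apply/forallP => i; apply/implyP => iS; have := h i; rewrite !inE (negbTE iS) andbF.
move=> [vt /forallP h] i; rewrite !inE; case: (eqVneq i t) => [->|] //=.
Qed.

Lemma dirs_upd c t e : e != Dot -> cdirs (face c (upd dw t e)) = cdirs c :\ t.
Proof.
move=> he; apply/setP => l; rewrite !inE ffunE; case: (eqVneq l t) => [->|] /=.
  by rewrite (negbTE he) andbF.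
by rewrite ffunE sgn_eqE andbT.
Qed.

Lemma reidx_e S t e (K : word d -> word d -> bool) : t \in S ->
  \big[addb/false]_(w | word_on S w) ((w t == Dot) && K w (upd w t e)) =
  \big[addb/false]_(x | word_on S x && (x t == e)) K (upd x t Dot) x.
Proof.
move=> tS; rewrite reupd -big_condl; apply: eq_big => [v|v /andP[_ /eqP vt]].
  by rewrite upd_on.
by rewrite updK.
Qed.

Lemma reidx S t (K : word d -> word d -> bool) : t \in S ->
  \big[addb/false]_(e | e != Dot) \big[addb/false]_(w | word_on S w)
     ((w t == Dot) && K w (upd w t e)) =
  \big[addb/false]_(x | word_on S x) ((x t != Dot) && K (upd x t Dot) x).
Proof.
move=> tS; rewrite -big_condl (part_at (fun x _ => K (upd x t Dot) x) _ (fun e => e != Dot)).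
by apply: eq_bigr => e _; rewrite reidx_e.
Qed.

Lemma cob_face (a : cochain d) c w : cobound a (face c w) =
  \big[addb/false]_(t in cdirs c)
     ((w t == Dot) && \big[addb/false]_(e | e != Dot) a (face c (upd w t e))).
Proof.
rewrite coboundE -(@sub_sum (cdirs c)); last first.
  by apply/subsetP => i; rewrite /= inE => /andP[].
apply: eq_bigr => t tS; rewrite /= inE tS /=.
case: (boolP (w t == Dot)) => //= /eqP wt.
by apply: eq_bigr => e _; rewrite face_face comp_upd.
Qed.

Definition FF (a b : cochain d) c (K : word d -> word d -> bool) :=
  \big[addb/false]_(x | word_on (cdirs c) x) \big[addb/false]_(y | word_on (cdirs c) y)
     ((a (face c x) && b (face c y)) && K x y).

Lemma shuf1 (p q r s : bool) : (p && q) && (r && s) = r && (s && (p && q)).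
Proof. by case: p; case: q; case: r; case: s. Qed.

Lemma T3 k (a b : cochain d) c : cup k a b c = FF a b c (fun x y => Cup k (cdirs c) x y).
Proof. rewrite cupE; apply: eq_bigr => x _; apply: eq_bigr => y _; by rewrite andbC. Qed.

Lemma T4 k (a b : cochain d) c : cup k b a c = FF a b c (fun x y => Cup k (cdirs c) y x).
Proof.
rewrite cupE exchange_big; apply: eq_bigr => x _; apply: eq_bigr => y _.
by rewrite andbC [b _ && _]andbC.
Qed.


Lemma T1 m (a b : cochain d) c : cup m (cobound a) b c = FF a b c
  (fun x y => \big[addb/false]_(t in cdirs c) ((x t != Dot) && Cup m (cdirs c) (upd x t Dot) y)).
Proof.
rewrite cupE /FF.
transitivity (\big[addb/false]_(y | word_on (cdirs c) y) \big[addb/false]_(t in (cdirs c))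
   \big[addb/false]_(x | word_on (cdirs c) x) ((x t != Dot) &&
        (Cup m (cdirs c) (upd x t Dot) y && (a (face c x) && b (face c y))))).
  rewrite exchange_big; apply: eq_bigr => y _.
  transitivity (\big[addb/false]_(w | word_on (cdirs c) w) \big[addb/false]_(t in (cdirs c))
     \big[addb/false]_(e | e != Dot) ((w t == Dot) &&
        (Cup m (cdirs c) w y && (a (face c (upd w t e)) && b (face c y))))).
    apply: eq_bigr => w _; rewrite cob_face big_andr big_andl; apply: eq_bigr => t _.
    case: (w t == Dot) => /=; last by rewrite andbF big1.
    by rewrite big_andr big_andl.
  rewrite exchange_big; apply: eq_bigr => t tS; rewrite exchange_big.
  by rewrite (reidx (fun w x => Cup m (cdirs c) w y && (a (face c x) && b (face c y)))).
symmetry; rewrite exchange_big; apply: eq_bigr => y _.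
under eq_bigr => x _ do rewrite big_andl.
rewrite exchange_big; apply: eq_bigr => t _; apply: eq_bigr => x _; exact: shuf1.
Qed.

Lemma T2 m (a b : cochain d) c : cup m a (cobound b) c = FF a b c
  (fun x y => \big[addb/false]_(t in cdirs c) ((y t != Dot) && Cup m (cdirs c) x (upd y t Dot))).
Proof.
rewrite cupE /FF; apply: eq_bigr => x _.
transitivity (\big[addb/false]_(t in (cdirs c))
   \big[addb/false]_(y | word_on (cdirs c) y) ((y t != Dot) &&
        (Cup m (cdirs c) x (upd y t Dot) && (a (face c x) && b (face c y))))).
  transitivity (\big[addb/false]_(w | word_on (cdirs c) w) \big[addb/false]_(t in (cdirs c))
     \big[addb/false]_(e | e != Dot) ((w t == Dot) &&
        (Cup m (cdirs c) x w && (a (face c x) && b (face c (upd w t e)))))).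
    apply: eq_bigr => w _; rewrite cob_face big_andl big_andl; apply: eq_bigr => t _.
    case: (w t == Dot) => /=; last by rewrite !andbF big1.
    by rewrite big_andl big_andl.
  rewrite exchange_big; apply: eq_bigr => t tS; rewrite exchange_big.
  by rewrite (reidx (fun w y => Cup m (cdirs c) x w && (a (face c x) && b (face c y)))).
symmetry; under eq_bigr => y _ do rewrite big_andl.
rewrite exchange_big; apply: eq_bigr => t _; apply: eq_bigr => y _; exact: shuf1.
Qed.


Lemma shuf2 (p q r s u : bool) : (p && q) && [&& r, s & u] = r && (s && (u && (p && q))).
Proof. by case: p; case: q; case: r; case: s; case: u. Qed.

Lemma TL m (a b : cochain d) c : cobound (cup m a b) c = FF a b c
  (fun x y => \big[addb/false]_(t in cdirs c)
     [&& x t != Dot, y t == x t & Cup m (cdirs c :\ t) (upd x t Dot) (upd y t Dot)]).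
Proof.
rewrite coboundE /FF.
transitivity (\big[addb/false]_(t in cdirs c) \big[addb/false]_(x | word_on (cdirs c) x)
  ((x t != Dot) && \big[addb/false]_(y | word_on (cdirs c) y) ((y t == x t) &&
     (Cup m (cdirs c :\ t) (upd x t Dot) (upd y t Dot) && (a (face c x) && b (face c y)))))).
  apply: eq_bigr => t tS.
  transitivity (\big[addb/false]_(e | e != Dot)
     \big[addb/false]_(x | word_on (cdirs c) x && (x t == e))
     \big[addb/false]_(y | word_on (cdirs c) y && (y t == e))
     (Cup m (cdirs c :\ t) (upd x t Dot) (upd y t Dot) && (a (face c x) && b (face c y)))).
    apply: eq_bigr => e he; rewrite cupE dirs_upd //.
    transitivity (\big[addb/false]_(v | word_on (cdirs c) v) ((v t == Dot) &&
      \big[addb/false]_(v' | word_on (cdirs c) v') ((v' t == Dot) &&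
        (Cup m (cdirs c :\ t) v v' && (a (face c (upd v t e)) && b (face c (upd v' t e))))))).
      rewrite -big_condl; apply: eq_big => [v|v _]. rewrite won_D1 // !sgn_eqE. by apply/idP/idP => /andP[h1 h2]; apply/andP; split.
      rewrite -[in RHS]big_condl; apply: eq_big => [v'|v' _].
        by rewrite won_D1 // !sgn_eqE; apply/idP/idP => /andP[h1 h2]; apply/andP; split.
      by rewrite !face_face !comp_dw_upd.
    rewrite (@reidx_e (cdirs c) t e (fun v x => \big[addb/false]_(v' | word_on (cdirs c) v')
       ((v' t == Dot) && (Cup m (cdirs c :\ t) v v' && (a (face c x) && b (face c (upd v' t e)))))) tS).
    apply: eq_bigr => x _.
    by rewrite (@reidx_e (cdirs c) t e (fun v' y =>
       Cup m (cdirs c :\ t) (upd x t Dot) v' && (a (face c x) && b (face c y))) tS).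
  rewrite -(part_at (fun x e => \big[addb/false]_(y | word_on (cdirs c) y && (y t == e))
     (Cup m (cdirs c :\ t) (upd x t Dot) (upd y t Dot) && (a (face c x) && b (face c y))))
     _ (fun e => e != Dot)).
  by rewrite big_condl; apply: eq_bigr => x _; rewrite big_condl.
symmetry.
under eq_bigr => x _ do under eq_bigr => y _ do rewrite big_andl.
under eq_bigr => x _ do rewrite exchange_big.
rewrite exchange_big; apply: eq_bigr => t _; apply: eq_bigr => x _.
rewrite big_andl; apply: eq_bigr => y _; exact: shuf2.
Qed.

End S.

Unset Implicit Arguments.
Set Strict Implicit.

Theorem proposition2 (d : nat) (hd : (1 <= d)%N) (m : nat) (hm : (1 <= m)%N)
  (p q : nat) (a b : cochain d) (ha : is_pcochain p a) (hb : is_pcochain q b) :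
  forall c : cell d,
    cobound (cup m a b) c =
    cup m (cobound a) b c (+) cup m a (cobound b) c (+)
    cup m.-1 a b c (+) cup m.-1 b a c.
Proof.
move=> c; rewrite TL T1 T2 T3 T4 /FF -!big_split; apply: eq_bigr => x _.
rewrite -!big_split; apply: eq_bigr => y _ /=.
by rewrite !andb_xorr coef_id.
Qed.
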